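(* Let $D=\{a_1/q_1,\dots,a_r/q_r\}\subset\mathbb{T}$, where each $a_j/q_j$ is an irreducible fraction with $q_j\equiv 2\pmod 4$. Then $\mathrm{Md}_{\mathbb{T}}(D)=1/2$, and there exists a Borel $D$-avoiding set $A\subset\mathbb{T}$ with $\mu(A)=1/2$.
   Context: $\mathbb{T}=\mathbb{R}/\mathbb{Z}$ with Haar probability measure $\mu$; $A$ is $D$-avoiding if $(A-A)\cap D=\emptyset$. $\mathrm{Md}_{\mathbb{T}}(D)=\sup\{\mu(A): A\subset\mathbb{T}\text{ Borel},\ (A-A)\cap D=\emptyset\}$. *)

(* Defs.v *)
(* The circle T = R/Z is modelled by its
   fundamental domain [0,1) with addition/subtraction taken modulo 1;
   the Haar probability measure on T corresponds to Lebesgue measure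
   restricted to [0,1), and Borel sets of T to Borel subsets of [0,1). *)
From HB Require Import structures.
From mathcomp Require Import all_boot all_order all_algebra.
From mathcomp Require Import all_classical all_reals all_analysis.
Set Implicit Arguments. Unset Strict Implicit. Unset Printing Implicit Defensive.
Import Order.TTheory GRing.Theory Num.Theory.
Local Open Scope classical_set_scope.
Local Open Scope ring_scope.

Definition tmod {R : realType} (x : R) : R := x - (Num.floor x)%:~R.

Definition avoiding {R : realType} (D A : set R) : Prop :=
  forall x y, A x -> A y -> ~ D (tmod (x - y)).

Definition avoiding_sets {R : realType} (D : set R) : set (set R) :=
  [set A : set R | measurable A /\ A `<=` `[0, 1[%classic /\ avoiding D A].

Definition MdT {R : realType} (D : set R) : \bar R :=
  ereal_sup ((@lebesgue_measure R) @` avoiding_sets D).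

Definition frac_pt {R : realType} (a : int) (q : nat) : R :=
  tmod ((a%:~R : R) / (q%:R : R)).

(* Main.v *)
Require Import Defs.
From HB Require Import structures.
From mathcomp Require Import all_boot all_order all_algebra.
From mathcomp Require Import all_classical all_reals all_analysis.
From mathcomp Require Import ring lra zify.
Import Order.TTheory GRing.Theory Num.Theory.
Local Open Scope classical_set_scope.
Local Open Scope ring_scope.

Lemma measurable_subc {R : realType} (c : R) :
  measurable_fun [set: measurableTypeR R] (fun x : R => x - c).
Proof. by apply: measurable_realfun.measurable_funB. Qed.
#[global] Hint Extern 0 (measurable_fun _ (fun x => x - _)) =>
  solve [apply: measurable_subc] : core.

Section S.
Context {R : realType}.
Local Notation mu := (@lebesgue_measure R).

Lemma lebesgue_shift (c : R) (A : set R) : measurable A ->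
  mu [set y | A (y - c)] = mu A.
Proof.
move=> mA.
have -> : [set y | A (y - c)] = (fun x : measurableTypeR R => x - c) @^-1` A by [].
have := @lebesgue_measure_unique R (pushforward mu ((fun x : R => x - c) : _ -> measurableTypeR R)).
move=> H; apply/esym; rewrite H //.
move=> _ [[a b]] _ <-; rewrite /pushforward.
rewrite /=.
set X := (X in _ = mu X).
have -> : X = `](a + c), (b + c)]%classic.
  rewrite /X; apply/seteqP; split => x /=; rewrite !in_itv /=.
  by rewrite ltrBrDr lerBlDr.
  by rewrite ltrBrDr lerBlDr.
have E (i : interval R) := @lebesgue_measure_itv R i.
rewrite !E /= !lte_fin ltrD2r.
by case: ifP => // _; rewrite -!EFinB; congr (_%:E); ring.
Qed.

Lemma measurable_shift (c : R) (A : set R) : measurable A ->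
  measurable [set y | A (y - c)].
Proof.
move=> mA; have := @measurable_subc R c measurableT A mA.
by rewrite setTI.
Qed.

Lemma tmod_itv (x : R) : 0 <= tmod x < 1.
Proof.
rewrite /tmod; have /andP[h1 h2] := floor_itv x.
rewrite intrD in h2; apply/andP; split; lra.
Qed.

Lemma tmod_id (x : R) : 0 <= x < 1 -> tmod x = x.
Proof.
move=> hx; by rewrite /tmod (@floor_def _ x 0) ?subr0 // add0r.
Qed.

Lemma tmod_addz (x : R) (n : int) : tmod (x + n%:~R) = tmod x.
Proof.
rewrite /tmod floorDrz ?intr_int // intrD intrKfloor; ring.
Qed.

Lemma tmod_eqP (x y : R) : tmod x = tmod y -> exists n : int, x = y + n%:~R.
Proof.
rewrite /tmod => h; exists (Num.floor x - Num.floor y).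
rewrite intrB; lra.
Qed.

Lemma ehalf (x : \bar R) : (0 <= x)%E -> (x + x <= 1%:E)%E -> (x <= (1/2)%:E)%E.
Proof.
case: x => [r| |] //= h0; rewrite ?lee_fin -?EFinD ?lee_fin => h; lra.
Qed.

Lemma inA01 {A : set R} {y : R} : A `<=` `[0, 1[%classic -> A y -> 0 <= y < 1.
Proof. by move=> h /h; rewrite /= in_itv /=. Qed.

Lemma avoid_half (d : R) (A : set R) : 0 <= d < 1 -> measurable A ->
  A `<=` `[0, 1[%classic ->
  (forall x y, A x -> A y -> tmod (x - y) <> d) -> (mu A <= (1/2)%:E)%E.
Proof.
move=> /andP[d0 d1] mA hsub hav.
set A1 := A `&` `]-oo, 1 - d[%classic.
set A2 := A `&` `[1 - d, +oo[%classic.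
set B1 := [set y | A1 (y - d)].
set B2 := [set y | A2 (y - (d - 1))].
have mA1 : measurable A1 by apply: measurableI.
have mA2 : measurable A2 by apply: measurableI.
have mB1 : measurable B1 by apply: measurable_shift.
have mB2 : measurable B2 by apply: measurable_shift.
have hA : mu A = (mu A1 + mu A2)%E.
  rewrite -measureU //; last first.
    apply/seteqP; split => // y [[_]]; rewrite /= !in_itv /= => h1 [_] => h2.
    move: h2; rewrite /= in_itv /= andbT => h2; lra.
  congr (mu _); apply/seteqP; split => y.
    move=> Ay; case: (ltP y (1 - d)) => h; [left|right]; split => //=; rewrite in_itv //= h //.
  by move=> [[]|[]].
have hB1 : mu B1 = mu A1 by apply: lebesgue_shift.
have hB2 : mu B2 = mu A2 by apply: lebesgue_shift.
have dAB1 : A `&` B1 = set0.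
  apply/seteqP; split => // y [Ay [Ax _]]; apply: (hav _ _ Ay Ax).
  have -> : y - (y - d) = d by ring.
  by rewrite tmod_id // d0 d1.
have dAB2 : A `&` B2 = set0.
  apply/seteqP; split => // y [Ay [Ax _]]; apply: (hav _ _ Ay Ax).
  have -> : y - (y - (d - 1)) = d + (-1)%:~R by rewrite intrN; ring.
  by rewrite tmod_addz tmod_id // d0 d1.
have dB12 : B1 `&` B2 = set0.
  apply/seteqP; split => // y [[Ay1 h1] [Ay2 h2]].
  move: h1 h2; rewrite /= !in_itv /= andbT => h1 h2.
  have := inA01 hsub Ay1; have := inA01 hsub Ay2; lra.
have hU : mu (A `|` B1 `|` B2) = (mu A + mu A)%E.
  have mAB1 : measurable (A `|` B1) by apply: measurableU.
  rewrite measureU //; last by rewrite setIUl dAB2 set0U dB12.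
  rewrite measureU //.
  change ((mu A + mu B1 + mu B2)%E = (mu A + mu A)%E).
  by rewrite hB1 hB2 hA addeA.
apply: ehalf; first exact: measure_ge0.
rewrite -hU.
have <- : mu `[0, 1[%classic = 1%:E by rewrite lebesgue_measure_itv /= lte_fin ltr01 sube0.
apply: le_measure; rewrite ?inE //; first by apply: measurableU => //; apply: measurableU.
move=> y [[Ay|[Ay h]]|[Ay h]]; first exact: hsub.
  move: h; rewrite /= !in_itv /= => h.
  have /andP[] := inA01 hsub Ay => ? ?; apply/andP; split; lra.
move: h; rewrite /= !in_itv /= andbT => h.
have /andP[] := inA01 hsub Ay => ? ?; apply/andP; split; lra.
Qed.

Lemma avoid_construct (M c m : nat) (a : int) (k l : nat) (x y : R) :
  M = (m * c)%N -> (0 < m)%N -> odd c -> odd `|a|%N ->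
  k%:R <= M%:R * x < k%:R + 1/2 -> l%:R <= M%:R * y < l%:R + 1/2 ->
  tmod (x - y) <> tmod (a%:~R / (2 * m)%:R).
Proof.
move=> hM hm hc ha /andP[hx1 hx2] /andP[hy1 hy2] /tmod_eqP [n hn].
set w : int := (c%:Z * a + 2 * (M%:Z * n))%R.
have hw : (w%:~R : R) = 2 * M%:R * (x - y).
  rewrite hn /w hM.
  rewrite !(intrD, intrM) /= -!pmulrn !natrM.
  have hm0 : (m%:R : R) != 0 by rewrite pnatr_eq0 -lt0n.
  field.
  by [].
have wdef : w = (c%:Z * a + 2 * (M%:Z * n))%R by [].
clearbody w.
set z : int := (w - 2 * k%:Z + 2 * l%:Z)%R.
have hz : (z%:~R : R) = (2 * (M%:R * x) - 2 * k%:R) - (2 * (M%:R * y) - 2 * l%:R).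
  rewrite /z !(intrD, intrM, intrN) hw -!pmulrn /=; ring.
have z0 : z = 0.
  have h1 : (-1 : R) < z%:~R by rewrite hz; lra.
  have h2 : (z%:~R : R) < 1 by rewrite hz; lra.
  have h1' : (-1 < z)%R by rewrite -(ltr_int R) intrN.
  have h2' : (z < 1)%R by rewrite -(ltr_int R).
  lia.
have : (c%:Z * a = 2 * (k%:Z - l%:Z - M%:Z * n))%R.
  move: z0; rewrite /z wdef; lia.
move/(congr1 (fun t : int => odd `|t|%N)); rewrite !abszM /= !oddM hc ha /=.
done.
Qed.

Definition Fk (M k : nat) : set R := `[k%:R / M%:R, (k%:R + 1/2) / M%:R[%classic.

Lemma memF (M k : nat) (x : R) : (0 < M)%N ->
  Fk M k x <-> k%:R <= M%:R * x < k%:R + 1/2.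
Proof.
move=> hM; have hM' : (0 : R) < M%:R by rewrite ltr0n.
rewrite /Fk /= in_itv /= ler_pdivrMr // ltr_pdivlMr // ![x * _]mulrC.
done.
Qed.

Lemma measF (M k : nat) : (0 < M)%N -> mu (Fk M k) = (1 / (2 * M%:R))%:E.
Proof.
move=> hM; have hM' : (0 : R) < M%:R by rewrite ltr0n.
rewrite /Fk lebesgue_measure_itv /= lte_fin ltr_pM2r ?invr_gt0 // ltrDl.
rewrite ifT; last lra.
rewrite -EFinB; congr (_%:E); field; lra.
Qed.

Lemma trivF (M : nat) : (0 < M)%N -> trivIset setT (Fk M).
Proof.
move=> hM; apply/trivIsetP => i j _ _ ij.
apply/seteqP; split => // x [/(memF _ _ _ hM) /andP[h1 h2] /(memF _ _ _ hM) /andP[h3 h4]].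
have : (i < j)%N \/ (j < i)%N by move: ij; rewrite neq_ltn => /orP.
case=> h.
  have : (i.+1%:R : R) <= j%:R by rewrite ler_nat.
  rewrite -natr1; lra.
have : (j.+1%:R : R) <= i%:R by rewrite ler_nat.
rewrite -natr1; lra.
Qed.

Lemma measUF (M : nat) : (0 < M)%N ->
  mu (\big[setU/set0]_(k < M) Fk M k) = (1/2)%:E.
Proof.
move=> hM; rewrite measure_bigsetU //; last exact: trivF.
  rewrite (eq_bigr (fun _ => (1 / (2 * M%:R))%:E)); last by move=> k _; exact: measF.
  rewrite sumEFin sumr_const card_ord; congr (_%:E).
  rewrite -mulr_natr; field.
  by rewrite pnatr_eq0 -lt0n.
move=> k; exact: measurable_itv.
Qed.
End S.

Lemma odd_half (n : nat) : (n = 2 %[mod 4])%N -> odd (n %/ 2) /\ n = (2 * (n %/ 2))%N.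
Proof.
move=> h; split; last by lia.
have : ((n %/ 2) %% 2 = 1)%N by lia.
by rewrite modn2; case: odd.
Qed.

Theorem mainTheorem16 (R : realType) (r : nat) (a : 'I_r -> int) (q : 'I_r -> nat)
  (hr : (0 < r)%N)
  (hq : forall j, q j = 2 %[mod 4])
  (hcop : forall j, coprime `|a j|%N (q j)) :
  let D : set R := [set frac_pt (a j) (q j) | j in [set: 'I_r]] in
  MdT D = (1 / 2 : R)%:E /\
  exists A : set R, [/\ measurable A, A `<=` `[0, 1[, avoiding D A &
                        lebesgue_measure A = (1 / 2 : R)%:E].
Proof.
move=> D.
pose m j := (q j %/ 2)%N.
have hm j : odd (m j) /\ q j = (2 * m j)%N := @odd_half (q j) (hq j).
have ha j : odd `|a j|%N.
  have := hcop j; rewrite /coprime; apply: contraTT => hev.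
  have h2 : (2 %| gcdn `|a j| (q j))%N.
    by rewrite dvdn_gcd (proj2 (hm j)) dvdn_mulr // andbT dvdn2.
  by apply/negP => /eqP h1; move: h2; rewrite h1.
pose M := (\prod_(j < r) m j)%N.
have oddMM : odd M.
  apply: (big_ind odd) => [//| x y hx hy|i _]; first by rewrite oddM hx hy.
  exact: (proj1 (hm i)).
have M0 : (0 < M)%N by move: oddMM; case: M.
pose c j := (\prod_(i < r | i != j) m i)%N.
have hMc j : M = (m j * c j)%N by rewrite /M (bigD1 j).
have oddc j : odd (c j).
  apply: (big_ind odd) => [//| x y hx hy|i _]; first by rewrite oddM hx hy.
  exact: (proj1 (hm i)).
pose A := \big[setU/set0]_(k < M) @Fk R M k.
have mA : measurable A.
  by apply: bigsetU_measurable => k _; exact: measurable_itv.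
have memA x : A x -> exists k, (k < M)%N /\ (k%:R <= M%:R * x < k%:R + 1/2).
  rewrite /A -bigcup_mkord => -[k /= hk hx]; exists k; split => //.
  exact/(memF _ _ _ M0).
have subA : A `<=` `[0, 1[%classic.
  move=> x /memA [k [hk /andP[h1 h2]]]; rewrite /= in_itv /=.
  have hM' : (0 : R) < M%:R by rewrite ltr0n.
  have hk' : (k.+1%:R : R) <= M%:R by rewrite ler_nat.
  have hk0 : (0 : R) <= k%:R by [].
  rewrite -natr1 in hk'.
  apply/andP; split; nra.
have avA : avoiding D A.
  move=> x y /memA [k [_ hx]] /memA [l [_ hy]] [j _ hj].
  move: hj; rewrite /frac_pt (proj2 (hm j)) => hj.
  have mj0 : (0 < m j)%N by move: (proj1 (hm j)); case: (m j).
  exact: (@avoid_construct R M (c j) (m j) (a j) k l x y (hMc j) mj0 (oddc j) (ha j) hx hy (esym hj)).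
have mu2 : lebesgue_measure A = (1 / 2 : R)%:E by exact: measUF.
split; last by exists A.
apply/eqP; rewrite eq_le; apply/andP; split.
  apply: ge_ereal_sup => _ [B [mB [sB avB]] <-].
  pose j0 := Ordinal hr.
  apply: (@avoid_half R (frac_pt (a j0) (q j0))) => //.
    exact: tmod_itv.
  move=> x y Bx By h; apply: (avB x y Bx By); rewrite h.
  by exists j0.
apply: le_ereal_sup_tmp; exists (1 / 2 : R)%:E => //.
by exists A.
Qed.
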